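(* Let $X$, $(S_n)$ be as in the context and assume Assumption (A) holds. Let $\nu\in \mathcal M_+(W_S)$ be a quasi-stationary distribution such that $\nu(\eta_S)>0$ and such that $\nu\{x:\ j_S(x)\leq \ell\}=1$ for some $\ell\geq 0$. Then the exponential absorption parameter of $\nu$ equals $\theta_{0,S}$.
   Context: Let $D$ be a measurable space, $\partial\notin D$, and $(X_n)_{n\in\mathbb Z_+}$ a Markov chain on $D\cup\{\partial\}$ for which $\partial$ is absorbing; $\tau_\partial=\inf\{n\ge0: X_n=\partial\}$; $\mathbb P_x,\mathbb E_x$ denote law and expectation given $X_0=x$, and $\mathbb P_\mu=\int\mathbb P_x\,\mu(dx)$. The sub-Markovian semigroup is $S_nf(x)=\mathbb E_x(f(X_n)\mathbbm 1_{n<\tau_\partial})$, $\mu S_nf=\int S_nf\,d\mu$. Functions are extended by $0$ outside their domain. $\mathcal M_+(D)$: finite nonnegative measures on $D$. For measurable $W:D\to[1,\infty)$, $\mathcal M(W)$ is the space of finite signed measures with $|\mu|(W)<\infty$, norm $\|\mu\|_W=|\mu|(W)$; $\mathcal M_+(W)$ its nonnegative part; $L^\infty(W)$: measurable $f$ with $\|f\|_W=\sup|f|/W<\infty$. $\theta_S(\mu):=\inf\{\theta\ge0:\liminf_n\theta^{-n}\mu S_n\mathbbm 1_D=0\}$, $\theta_S(x)=\theta_S(\delta_x)$, $\theta_{0,S}=\sup_x\theta_S(x)$; $j_S(\mu):=\inf\{\ell\ge0:\liminf_n n^{-\ell}\theta_{0,S}^{-n}\mu S_n\mathbbm 1_D=0\}$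 (with $\inf\emptyset=0$), $j_S(x)=j_S(\delta_x)$. A quasi-stationary distribution (QSD) is a probability measure $\nu$ on $D$ with $\mathbb P_\nu(X_n\in\cdot\mid n<\tau_\partial)=\nu$ for all $n\ge0$; then there is $\theta\in(0,1]$ with $\mathbb P_\nu(n<\tau_\partial)=\theta^n$ for all $n$, i.e. $\nu S_n=\theta^n\nu$; $\theta$ is its exponential absorption (convergence) parameter. Assumption (A): $\theta_{0,S}\in(0,1]$, $j_S$ is integer valued, and there exist a measurable $W_S:D\to[1,\infty)$, a finite or countable set $I_S$, probability measures $\nu_{S,i}\in\mathcal M(W_S)$ and non-identically zero nonnegative $\eta_{S,i}\in L^\infty(W_S)$ ($i\in I_S$) with $\sum_{i}\eta_{S,i}\nu_{S,i}(W_S)\in L^\infty(W_S)$, and $\alpha_{S,n}\to0$, such that for all $f\in L^\infty(W_S)$, $n\ge1$, $x\in D$: $\big|\theta_{0,S}^{-n}n^{-j_S(x)}\mathbb E_x(f(X_n)\mathbbm 1_{n<\tau_\partial})-\sum_{i}\eta_{S,i}(x)\nu_{S,i}(f)\big|\le\alpha_{S,n}W_S(x)\|f\|_{W_S}$. Then $\eta_S:=\sum_{i\in I_S}\eta_{S,i}$. *)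

(* Defs.v *)
From HB Require Import structures.
From mathcomp Require Import all_boot all_order all_algebra.
From mathcomp Require Import all_classical all_reals all_analysis.
Set Implicit Arguments. Unset Strict Implicit. Unset Printing Implicit Defensive.
Import Order.TTheory GRing.Theory Num.Theory.
Import numFieldNormedType.Exports.
Local Open Scope classical_set_scope.
Local Open Scope ring_scope.

(* The chain X on D u {partial} with partial absorbing is encoded by its
   sub-Markovian transition kernel K on D:  K x A = P_x(X_1 \in A), A \subset D
   (mass defect 1 - K x D = P_x(X_1 = partial)).                              *)

Section QSD.
Context {d : measure_display} {T : measurableType d} {R : realType}.
Variable K : R.-spker T ~> T.

(* S_n f (x) = E_x (f(X_n) 1_{n < tau}),  built by the Markov property
   S_{n+1} f (x) = int K(x,dy) S_n f (y).                                    *)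
Fixpoint Ssg (n : nat) (f : T -> \bar R) : T -> \bar R :=
  match n with
  | 0%N => f
  | n'.+1 => fun x => (\int[K x]_y Ssg n' f y)%E
  end.

Definition muS (mu : {measure set T -> \bar R}) (n : nat) (f : T -> \bar R)
  : \bar R := (\int[mu]_x Ssg n f x)%E.

Definition oneD : T -> \bar R := fun _ => 1%E.

(* theta_S(mu) = inf { theta >= 0 : liminf_n theta^{-n} mu S_n 1_D = 0 }
   (theta = 0 can be dropped) *)
Definition thetaS (mu : {measure set T -> \bar R}) : R :=
  inf [set th : R | 0 < th /\
        limn_einf (fun n => ((th ^- n)%:E * muS mu n oneD)%E) = 0%E].

Definition thetaSx (x : T) : R := thetaS (\d_x).

Definition theta0 : R := sup [set thetaSx x | x in [set: T]].

(* j_S(mu) = inf { l >= 0 : liminf_n n^{-l} theta0^{-n} mu S_n 1_D = 0 },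
   with inf of the empty set = 0 (which is mathcomp's convention for inf). *)
Definition jS (mu : {measure set T -> \bar R}) : R :=
  inf [set l : R | 0 <= l /\
        limn_einf (fun n => (((n%:R `^ l)^-1 * theta0 ^- n)%:E
                             * muS mu n oneD)%E) = 0%E].

Definition jSx (x : T) : R := jS (\d_x).

Definition LinfW (W : T -> R) (f : T -> R) : Prop :=
  measurable_fun [set: T] f /\ exists C : R, forall x, `|f x| <= C * W x.

Definition normW (W : T -> R) (f : T -> R) : R :=
  sup [set `|f x| / W x | x in [set: T]].

Definition inMW (W : T -> R) (mu : {measure set T -> \bar R}) : Prop :=
  (\int[mu]_x (W x)%:E < +oo)%E.

Definition sumI (I : set nat) (a : nat -> \bar R) : \bar R :=
  (\sum_(i <oo | i \in I) a i)%E.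

(* Assumption (A), with the data W_S, I_S, nu_{S,i}, eta_{S,i}, alpha_{S,n}
   made explicit (the index set I_S is a subset of nat). *)
Definition assumptionA (W : T -> R) (I : set nat) (nu : nat -> probability T R)
         (eta : nat -> T -> R) (alpha : nat -> R) : Prop :=
  0 < theta0 <= 1 /\
  (forall x, exists k : nat, jSx x = k%:R) /\
    [/\ (measurable_fun [set: T] W /\ (forall x, 1 <= W x)),
        (forall i, i \in I -> inMW W (nu i))
        /\
        (forall i, i \in I ->
           LinfW W (eta i) /\ (forall x, 0 <= eta i x) /\ exists x, eta i x != 0),
        (exists C : R, forall x,
           (sumI I (fun i => (eta i x)%:E * (\int[nu i]_y (W y)%:E)) <= (C * W x)%:E)%E),
        alpha n @[n --> \oo] --> 0 &
        forall f, LinfW W f -> forall (n : nat) x, (0 < n)%N ->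
          (`| ((theta0 ^- n * (n%:R `^ jSx x)^-1)%:E * Ssg n (fun y => (f y)%:E) x
               - sumI I (fun i => (eta i x)%:E * (\int[nu i]_y (f y)%:E))) |
           <= (alpha n * W x * normW W f)%:E)%E ].

Definition etaS (I : set nat) (eta : nat -> T -> R) (x : T) : \bar R :=
  sumI I (fun i => (eta i x)%:E).

(* quasi-stationary distribution: P_nu(X_n in A | n < tau) = nu(A) *)
Definition is_QSD (nu : probability T R) : Prop :=
  forall n : nat, (0 < muS nu n oneD)%E /\
    forall A, measurable A ->
      muS nu n (fun x => (\1_A x)%:E) = (nu A * muS nu n oneD)%E.

Definition abs_param (nu : probability T R) (th : R) : Prop :=
  0 < th <= 1 /\ forall n : nat, muS nu n oneD = (th ^+ n)%:E.

End QSD.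

(* Main.v *)
Require Import Defs.
From HB Require Import structures.
From mathcomp Require Import all_boot all_order all_algebra.
From mathcomp Require Import all_classical all_reals all_analysis.
From mathcomp Require Import measurable_realfun.
From mathcomp Require Import ring lra.
Import Order.TTheory GRing.Theory Num.Theory.
Local Open Scope classical_set_scope.
Local Open Scope ring_scope.

Lemma abs_sub_bound (R : realType) (u v : \bar R) (r : R) :
  (`|u - v| <= r%:E)%E -> (v <= u + r%:E)%E /\ (u <= v + r%:E)%E.
Proof.
move: u v => [u| |] [v| |] //=; rewrite ?lee_fin.
- rewrite ler_norml => /andP[h1 h2]; split; lra.
Qed.

Lemma bernoulli_ineq (R : realType) (h : R) n : 0 <= h ->
  1 + n%:R * h <= (1 + h) ^+ n.
Proof.
move=> h0; elim: n => [|n IH]; first by rewrite mul0r addr0 expr0.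
rewrite exprS -natr1.
have n0 : (0:R) <= n%:R by rewrite ler0n.
have a2 : 0 <= n%:R * h * h by rewrite !mulr_ge0.
have h1 : 0 <= 1 + h by rewrite addr_ge0.
apply: (le_trans _ (ler_wpM2l h1 IH)).
have e : (1 + h) * (1 + n%:R * h) = 1 + (n%:R + 1) * h + n%:R * h * h by ring.
rewrite e; lra.
Qed.

Lemma growth (R : realType) (q B : R) (k N : nat) : 0 <= q ->
  (forall n, (N <= n)%N -> q ^+ n <= B * n%:R ^+ k) -> q <= 1.
Proof.
move=> q0 H; rewrite leNgt; apply/negP => q1.
pose p := q `^ (k.+1%:R^-1).
have kp : 0 < (k.+1%:R : R)^-1 by rewrite invr_gt0 ltr0n.
have p1 : 1 < p.
  have e1 : 1 `^ (k.+1%:R^-1) = 1 :> R by rewrite powR1.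
  rewrite /p -{1}e1.
  by apply: gt0_ltr_powR => //; rewrite nnegrE ?ler01 //; lra.
have pq : p ^+ k.+1 = q.
  rewrite /p -powR_mulrn ?powR_ge0 // -powRrM mulVf ?pnatr_eq0 //.
  by rewrite powRr1.
pose h := p - 1.
have h0 : 0 < h by rewrite /h subr_gt0.
pose h' := h ^+ k.+1.
have h'0 : 0 < h' by rewrite exprn_gt0.
have [n [Nn n0 hb]] : exists n, [/\ (N <= n)%N, (0 < n)%N & B / h' < n%:R].
  exists (N + (Num.truncn (B / h')).+1)%N; split.
  - exact: leq_addr.
  - by rewrite addnS.
  - apply: (lt_le_trans (truncnS_gt _)); rewrite ler_nat; exact: leq_addl.
have := H n Nn.
have nR0 : (0 : R) < n%:R by rewrite ltr0n.
have : (n%:R * h) ^+ k.+1 <= q ^+ n.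
  rewrite -pq -exprM mulnC exprM.
  apply: lerXn2r; rewrite ?nnegrE.
  - by apply: mulr_ge0; lra.
  - by apply: exprn_ge0; lra.
  have e : 1 + h = p by rewrite /h addrC subrK.
  have := @bernoulli_ineq R h n (ltW h0); rewrite e; lra.
rewrite exprMn exprS -/h' => h1 h2.
have nk : 0 < n%:R ^+ k :> R by rewrite exprn_gt0.
have : n%:R * h' <= B.
  rewrite -(ler_pM2r nk); move: (le_trans h1 h2); rewrite mulrC.
  by rewrite -mulrA [h' * _]mulrC mulrA; move=> hh; rewrite (mulrC (n%:R)) -mulrA (mulrC h') -mulrA mulrA. 
rewrite -ler_pdivlMr // => hB.
by move: (lt_le_trans hb hB); rewrite ltxx.
Qed.

Section Semi.
Local Open Scope ereal_scope.
Context d (T : measurableType d) (R : realType) (K : R.-spker T ~> T).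

Lemma Ssg_ge0 n x : 0 <= Ssg K n (oneD (R:=R)) x.
Proof.
elim: n x => [|n IH] x /=; first by rewrite /oneD.
by apply: integral_ge0 => y _.
Qed.

Lemma Ssg_meas n : measurable_fun [set: T] (Ssg K n (oneD (R:=R))).
Proof.
elim: n => [|n IH] /=; first exact: measurable_cst.
apply: measurable_fun_integral_kernel => //.
- by move=> U mU; exact: measurable_kernel.
- by move=> z; exact: Ssg_ge0.
Qed.

Variable nu : probability T R.

Let P : T -> pprobability T R := fun _ => nu.
Let mP : measurable_fun [set: T] P := measurable_cst _.
Let L := kprobability mP.
Let KK := @kernel.kernel_snd _ _ _ T T T R K.

Lemma comp_nu (x0 : T) (g : T -> \bar R) :
  (forall x, 0 <= g x) -> measurable_fun [set: T] g ->
  \int[nu]_x (\int[K x]_y g y) = \int[mkcomp L KK x0]_y g y.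
Proof.
move=> g0 mg.
by rewrite /mkcomp integral_kcomp.
Qed.

Lemma mkcompE x0 A : mkcomp L KK x0 A = \int[nu]_y K y A.
Proof. by []. Qed.

Lemma muS1_indic A : measurable A ->
  muS K nu 1 (fun x => (\1_A x)%:E) = \int[nu]_y K y A.
Proof.
move=> mA; rewrite /muS /=; apply: eq_integral => y _.
by rewrite integral_indic // setIT.
Qed.

Lemma muS1_le1 : 0 <= muS K nu 1 oneD <= 1.
Proof.
apply/andP; split; first by apply: integral_ge0 => x _; exact: (Ssg_ge0 1).
rewrite /muS /=.
have -> : (fun x => \int[K x]_y oneD y) = (fun x => K x setT).
  apply/funext => x; rewrite /oneD (_ : (fun _ => 1) = cst 1) //.
  by rewrite integral_cst // mul1e.
apply: (@le_trans _ _ (\int[nu]_x (cst 1 x))).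
  apply: ge0_le_integral => //.
  - exact: measurable_kernel.
  - by move=> x _; exact: sprob_kernel_le1.
by rewrite integral_cst // mul1e; exact: probability_le1.
Qed.

Lemma muS0 : muS K nu 0 oneD = 1.
Proof.
rewrite /muS /= /oneD (_ : (fun _ => 1) = cst 1) // integral_cst // mul1e.
exact: (probability_setT nu).
Qed.

Lemma qsd_pow : is_QSD K nu ->
  forall n, muS K nu n oneD = ((fine (muS K nu 1 oneD)) ^+ n)%:E.
Proof.
move=> hq.
have /andP[c0 c1] := muS1_le1.
set c := muS K nu 1 oneD in c0 c1 *.
have cfin : c \is a fin_num by rewrite ge0_fin_numE // (le_lt_trans c1) // ltey.
have th0 : (0 <= fine c)%R by rewrite fine_ge0.
have cE : c = (fine c)%:E by rewrite fineK.
have [x0 _] : [set: T] !=set0.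
  apply/set0P/negP => /eqP h.
  have := probability_setT nu; rewrite h measure0 => e.
  by move: (@lte01 R); rewrite -e ltxx.
have key g : (forall x, 0 <= g x) -> measurable_fun [set: T] g ->
    \int[nu]_x (\int[K x]_y g y) = (fine c)%:E * \int[nu]_x g x.
  move=> g0 mg; rewrite (comp_nu x0) //.
  rewrite (@eq_measure_integral _ _ _ _ (mscale (NngNum th0) nu)); last first.
    move=> A mA _; rewrite mkcompE /mscale /=.
    have := (hq 1%N).2 A mA; rewrite muS1_indic // => ->.
    by rewrite -/c muleC [in LHS]cE.
  by rewrite ge0_integral_mscale.
elim=> [|n IH]; first by rewrite muS0 expr0.
rewrite /muS /= key; last 2 first.
- exact: Ssg_ge0.
- exact: Ssg_meas.
by rewrite -/(muS K nu n oneD) IH -EFinM exprS.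
Qed.

End Semi.

Theorem proposition2p2 (d : measure_display) (T : measurableType d) (R : realType)
  (K : R.-spker T ~> T)
  (W : T -> R) (I : set nat) (nuS : nat -> probability T R)
  (eta : nat -> T -> R) (alpha : nat -> R) :
  assumptionA K W I nuS eta alpha ->
  forall (nu : probability T R),
    inMW W nu ->
    is_QSD K nu ->
    (0 < \int[nu]_x etaS I eta x)%E ->
    (exists l : R, 0 <= l /\
       exists A : set T, [/\ measurable A, nu A = 1%E &
                             forall x, A x -> jSx K x <= l]) ->
    abs_param K nu (theta0 K).
Proof.
move=> [/andP[th0p th01] [jint [[mW W1] [nuW etaP] [C hC] acvg bnd]]].
move=> nu nuWfin hq etapos [l [l0 [A [mA nuA jA]]]].
set th0 := theta0 K in th0p th01 bnd *.
have hpow := @qsd_pow _ _ _ K nu hq.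
set th := fine (muS K nu 1 oneD) in hpow.
have th_ge0 : 0 <= th by rewrite /th fine_ge0 //; case/andP: (@muS1_le1 _ _ _ K nu).
have [x0 _] : [set: T] !=set0.
  apply/set0P/negP => /eqP h.
  have := probability_setT nu; rewrite h measure0 => e.
  by move: (@lte01 R); rewrite -e ltxx.
have W0 x : 0 < W x by apply: (lt_le_trans ltr01 (W1 x)).
pose f1 : T -> R := fun _ => 1.
have Lf1 : LinfW W f1.
  split; first exact: measurable_cst.
  by exists 1 => x; rewrite /f1 normr1 mul1r W1.
pose nW := normW W f1.
have nW01 : 0 <= nW <= 1.
  have ub : ubound [set `|f1 x| / W x | x in [set: T]] 1.
    by move=> _ [x _ <-]; rewrite /f1 normr1 mul1r invf_le1.
  apply/andP; split.
    apply: (@le_trans _ _ (`|f1 x0| / W x0)).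
      by rewrite divr_ge0 // ltW.
    apply: ub_le_sup; first by exists 1.
    by exists x0.
  by apply: ge_sup => //; exists (`|f1 x0| / W x0); exists x0.
have etaS_ge0 x : (0 <= etaS I eta x)%E.
  apply: nneseries_ge0 => i _ iI; rewrite lee_fin; exact: (etaP i iI).2.1 x.
have pI i : (\int[nuS i]_y (f1 y)%:E = 1)%E.
  rewrite (_ : (fun y => _) = cst 1%E) // integral_cst // mul1e.
  exact: probability_setT.
have ptw n x : (0 < n)%N ->
  (etaS I eta x <= (th0 ^- n)%:E * Ssg K n oneD x + (`|alpha n| * W x)%:E)%E /\
  ((th0 ^- n)%:E * Ssg K n oneD x <=
     (n%:R `^ jSx K x)%:E * (etaS I eta x + (`|alpha n| * W x)%:E))%E.
  move=> n0.
  have := bnd f1 Lf1 n x n0.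
  rewrite (_ : (fun i => _) = (fun i => (eta i x)%:E)); last first.
    by apply/funext => i; rewrite pI mule1.
  change (Ssg K n (fun y => (f1 y)%:E) x) with (Ssg K n oneD x).
  rewrite -/(etaS I eta x) -/nW.
  move=> /abs_sub_bound [lo up].
  set s := Ssg K n oneD x in lo up *.
  have s0 : (0 <= s)%E by exact: Ssg_ge0.
  set j := jSx K x in lo up *.
  have j0 : 0 <= j by rewrite /j; have [k ->] := jint x; rewrite ler0n.
  have n1 : 1 <= n%:R :> R by rewrite ler1n.
  have nj1 : 1 <= n%:R `^ j.
    by have := ler_powR n1 j0; rewrite powRr0.
  have nj0 : 0 < n%:R `^ j by apply: (lt_le_trans ltr01 nj1).
  have rr : alpha n * W x * nW <= `|alpha n| * W x.
    apply: (@le_trans _ _ (`|alpha n| * W x * nW)).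
      case/andP: nW01 => nW0 _.
      by apply: ler_wpM2r => //; apply: ler_wpM2r; [exact: ltW | exact: ler_norm].
    rewrite -[leRHS]mulr1; apply: ler_wpM2l; last by case/andP: nW01.
    by apply: mulr_ge0 => //; exact: ltW.
  have thn0 : 0 < th0 ^- n by rewrite invr_gt0 exprn_gt0.
  have a_le : th0 ^- n / n%:R `^ j <= th0 ^- n.
    rewrite ler_pdivrMr //; exact: ler_peMr (ltW thn0) nj1.
  split.
    apply: (le_trans lo); apply: leeD; last by rewrite lee_fin.
    exact: lee_wpmul2r.
  have -> : th0 ^- n = n%:R `^ j * (th0 ^- n / n%:R `^ j).
    by rewrite mulrC divfK // gt_eqF.
  rewrite EFinM -muleA; apply: lee_wpmul2l; first by rewrite lee_fin ltW.
  apply: (le_trans up); apply: leeD2l; by rewrite lee_fin.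
have mEta : measurable_fun [set: T] (etaS I eta).
  apply: (@ge0_emeasurable_sum _ _ _ _ (fun i x => (eta i x)%:E) [pred i | i \in I]).
    by move=> i x _ iI; rewrite lee_fin; exact: (etaP i iI).2.1 x.
  move=> i iI; apply/measurable_EFinP; exact: (etaP i iI).1.1.
have mWE : measurable_fun [set: T] (fun x => (W x)%:E).
  exact/measurable_EFinP.
set IW := (\int[nu]_x (W x)%:E)%E.
have IW0 : (0 <= IW)%E by apply: integral_ge0 => x _; rewrite lee_fin ltW.
have IWE : IW = (fine IW)%:E by rewrite fineK // ge0_fin_numE.
set MW := fine IW.
have MW0 : 0 <= MW by rewrite /MW fine_ge0.
have etaC x : (etaS I eta x <= (`|C| * W x)%:E)%E.
  apply: (@le_trans _ _ (sumI I (fun i => (eta i x)%:E * \int[nuS i]_y (W y)%:E)%E)).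
    apply: lee_nneseries => i.
      by move=> _ iI; rewrite lee_fin; exact: (etaP i iI).2.1 x.
    move=> iI; apply: lee_pemulr; first by rewrite lee_fin; exact: (etaP i iI).2.1 x.
    rewrite -(pI i); apply: ge0_le_integral => //.
    - by apply/measurable_EFinP; exact: measurable_cst.
    - by move=> y _; rewrite lee_fin /f1 W1.
  apply: (le_trans (hC x)); rewrite lee_fin; apply: ler_wpM2r; [exact: ltW | exact: ler_norm].
set IE := (\int[nu]_x etaS I eta x)%E in etapos *.
have IEfin : IE \is a fin_num.
  rewrite ge0_fin_numE; last exact: ltW.
  apply: (@le_lt_trans _ _ (\int[nu]_x (`|C| * W x)%:E)%E).
    apply: ge0_le_integral => //.
    by apply/measurable_EFinP; apply: measurable_funM => //; exact: measurable_cst.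
  under eq_integral do rewrite EFinM.
  rewrite ge0_integralZl //; last by move=> x _; rewrite lee_fin ltW.
  by rewrite -/IW IWE -EFinM ltey.
set E := fine IE.
have IEE : IE = E%:E by rewrite fineK.
have E0 : 0 < E by rewrite -lte_fin -IEE.
have th0n0 n : 0 <= th0 ^- n by rewrite invr_ge0 exprn_ge0 // ltW.
have mR n : measurable_fun [set: T]
    (fun x => (th0 ^- n)%:E * Ssg K n oneD x + (`|alpha n| * W x)%:E)%E.
  apply: emeasurable_funD; first exact/measurable_funeM/Ssg_meas.
  by apply/measurable_EFinP; apply: measurable_funM => //; exact: measurable_cst.
have eqR n : (\int[nu]_x ((th0 ^- n)%:E * Ssg K n oneD x + (`|alpha n| * W x)%:E))%E
    = ((th0 ^- n)%:E * muS K nu n oneD + (`|alpha n|)%:E * IW)%E.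
  have f10 : forall x, [set: T] x -> (0 <= (th0 ^- n)%:E * Ssg K n oneD x)%E.
    by move=> x _; apply: mule_ge0; [rewrite lee_fin | exact: Ssg_ge0].
  have mf1 : measurable_fun [set: T] (fun x => (th0 ^- n)%:E * Ssg K n oneD x)%E.
    exact/measurable_funeM/Ssg_meas.
  have f20 : forall x, [set: T] x -> (0 <= (`|alpha n| * W x)%:E)%E.
    by move=> x _; rewrite lee_fin mulr_ge0 // ltW.
  have mf2 : measurable_fun [set: T] (fun x => (`|alpha n| * W x)%:E).
    by apply/measurable_EFinP; apply: measurable_funM => //; exact: measurable_cst.
  rewrite (ge0_integralD nu measurableT f10 mf1 f20 mf2).
  rewrite (ge0_integralZl nu measurableT (@Ssg_meas _ _ _ K n)); last 2 first.
  - by move=> x _; exact: Ssg_ge0.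
  - by rewrite lee_fin.
  congr (_ + _); under eq_integral do rewrite EFinM.
  rewrite (ge0_integralZl nu measurableT mWE) //.
  by move=> x _; rewrite lee_fin ltW.
have lowI n : (0 < n)%N -> E <= th0 ^- n * th ^+ n + `|alpha n| * MW.
  move=> n0; rewrite -lee_fin -IEE EFinD !EFinM -hpow -IWE -eqR.
  apply: (ge0_le_integral nu measurableT (fun x _ => etaS_ge0 x) mEta (mR n)).
  by move=> x _; case: (ptw n x n0).
have nAc : nu (~` A) = 0%E by rewrite probability_setC // nuA subee.
have upI n : (0 < n)%N -> th0 ^- n * th ^+ n <= n%:R `^ l * (E + `|alpha n| * MW).
  move=> n0; rewrite -lee_fin !EFinM EFinD EFinM -hpow -IEE -IWE.
  have n1 : 1 <= n%:R :> R by rewrite ler1n.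
  have nl0 : 0 <= n%:R `^ l by exact: powR_ge0.
  have f20 : forall x, [set: T] x -> (0 <= (`|alpha n| * W x)%:E)%E.
    by move=> x _; rewrite lee_fin mulr_ge0 // ltW.
  have mf2 : measurable_fun [set: T] (fun x => (`|alpha n| * W x)%:E).
    by apply/measurable_EFinP; apply: measurable_funM => //; exact: measurable_cst.
  have mY : measurable_fun [set: T] (fun x => etaS I eta x + (`|alpha n| * W x)%:E)%E.
    exact: emeasurable_funD.
  have Y0 : forall x, [set: T] x -> (0 <= etaS I eta x + (`|alpha n| * W x)%:E)%E.
    by move=> x _; apply: adde_ge0 => //; exact: f20.
  have eL : ((th0 ^- n)%:E * muS K nu n oneD)%E
      = (\int[nu]_x ((th0 ^- n)%:E * Ssg K n oneD x))%E.
    rewrite (ge0_integralZl nu measurableT (@Ssg_meas _ _ _ K n)) //.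
    - by move=> x _; exact: Ssg_ge0.
    - by rewrite lee_fin.
  have eU : (\int[nu]_x ((n%:R `^ l)%:E * (etaS I eta x + (`|alpha n| * W x)%:E)))%E
      = ((n%:R `^ l)%:E * (IE + (`|alpha n|)%:E * IW))%E.
    rewrite (ge0_integralZl nu measurableT mY Y0) ?lee_fin //.
    rewrite (ge0_integralD nu measurableT (fun x _ => etaS_ge0 x) mEta f20 mf2).
    congr (_ * (_ + _))%E; under eq_integral do rewrite EFinM.
    rewrite (ge0_integralZl nu measurableT mWE) //.
    by move=> x _; rewrite lee_fin ltW.
  rewrite eL -eU.
  apply: ae_ge0_le_integral => //.
  - by move=> x _; apply: mule_ge0; [rewrite lee_fin | exact: Ssg_ge0].
  - exact/measurable_funeM/Ssg_meas.
  - by move=> x _; apply: mule_ge0; [rewrite lee_fin | exact: Y0].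
  - exact: measurable_funeM.
  exists (~` A); split => //; first exact: measurableC.
  move=> x /= nx Ax; apply: nx => _.
  case: (ptw n x n0) => _ h; apply: (le_trans h).
  apply: lee_wpmul2r; first exact: Y0.
  by rewrite lee_fin; apply: ler_powR => //; exact: jA.
have qn n : (th / th0) ^+ n = th0 ^- n * th ^+ n by rewrite expr_div_n mulrC.
have q0 : 0 <= th / th0 by rewrite divr_ge0 // ltW.
have q1 : 1 <= th / th0.
  rewrite leNgt; apply/negP => qlt.
  have qcv : (fun n => (th / th0) ^+ n) @ \oo --> 0.
    by apply: cvg_expr; rewrite ger0_norm.
  have e1 : 0 < E / 2 / (MW + 1) by rewrite !divr_gt0 // ltr_pwDr.
  have e2 : 0 < E / 2 by rewrite divr_gt0.
  have [N1 _ H1] := (cvgr0Pnorm_lt _).1 acvg _ e1.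
  have [N2 _ H2] := (cvgr0Pnorm_lt _).1 qcv _ e2.
  pose n := (maxn N1 N2).+1.
  have hn1 := H1 n (leq_trans (leq_maxl N1 N2) (leqnSn _)).
  have hn2 := H2 n (leq_trans (leq_maxr N1 N2) (leqnSn _)).
  rewrite /= ger0_norm ?exprn_ge0 // in hn2.
  have := lowI n (ltn0Sn _); rewrite -qn.
  have a1 : `|alpha n| * MW <= E / 2 / (MW + 1) * MW.
    by apply: ler_wpM2r => //; exact: ltW.
  have a2 : E / 2 / (MW + 1) * MW <= E / 2.
    rewrite mulrAC ler_pdivrMr ?ltr_pwDr //.
    by apply: ler_wpM2l; [exact: ltW | lra].
  move: hn1 => _. lra.
have qle1 : th / th0 <= 1.
  have [N3 _ H3] := (cvgr0Pnorm_lt _).1 acvg _ ltr01.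
  apply: (@growth R (th / th0) (E + MW) (Num.truncn l).+1 N3.+1 q0) => n Nn.
  have n0 : (0 < n)%N by apply: leq_trans Nn.
  have hn := H3 n (ltnW Nn).
  rewrite qn; apply: (le_trans (upI n n0)).
  have n1 : 1 <= n%:R :> R by rewrite ler1n.
  have nl : n%:R `^ l <= n%:R ^+ (Num.truncn l).+1.
    rewrite -powR_mulrn ?ler0n //; apply: ler_powR => //.
    exact: ltW (truncnS_gt _).
  rewrite mulrC; apply: ler_pM.
  - by apply: addr_ge0; [exact: ltW | apply: mulr_ge0].
  - exact: powR_ge0.
  - rewrite lerD2l -[leRHS]mul1r; apply: ler_wpM2r => //; exact: ltW.
  - exact: nl.
have qE : th / th0 = 1 by apply/le_anti; rewrite q1 qle1.
have thE : th = th0.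
  have th0n : th0 != 0 by rewrite gt_eqF.
  by rewrite -(divfK th0n th) qE mul1r.
split; first by rewrite th0p th01.
by move=> n; rewrite hpow thE.
Qed.
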